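(* Let $X$ be a finite rack. There exists $N_0$ (depending on $X$) such that for every $N\ge N_0$, the natural semigroup homomorphism $S_X^*(N)\to\Gamma_X$, sending the class of $(x_1,\dots,x_n)$ to $x_1\cdots x_n$, is injective.
   Context: A rack is a set $X$ with an operation $x^y$ such that $x\mapsto x^y$ is bijective for each $y$ and $(z^x)^y=(z^y)^{x^y}$. Its connected components $C_1,\dots,C_k$ are the classes of the smallest equivalence relation with $x\sim x^y$. $B_n$ acts on $X^n$ from the right by $(\dots,x_i,x_{i+1},\dots)^{\sigma_i}=(\dots,x_{i+1},x_i^{x_{i+1}},\dots)$. The structure semigroup is $S_X=\bigsqcup_{n\ge1}X^n/B_n$ with concatenation. The structure group is $\Gamma_X=\langle X\mid y^{-1}xy=x^y\text{ for all }x,y\in X\rangle$. For nonnegative $n_1,\dots,n_k$ with sum $n$, $X^*(n_1,\dots,n_k)$ is the set of $(x_1,\dots,x_n)\in X^n$ with exactly $n_j$ entries in $C_j$ for each $j$ whose entries generate $X$ (lie in no proper subset closed under $x^y$), and $S_X^*(N)=\bigcup_{n_1,\dots,n_k\ge N}X^*(n_1,\dots,n_k)/B_n$. *)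

(* Defs.v *)
From mathcomp Require Import all_boot.
From Stdlib Require Import Relation_Operators.
Set Implicit Arguments. Unset Strict Implicit. Unset Printing Implicit Defensive.

Section Rack.
Variables (X : finType) (op : X -> X -> X).
(* op x y is the rack operation x^y *)

Definition is_rack : Prop :=
  (forall y, bijective (fun x => op x y)) /\
  (forall x y z, op (op z x) y = op (op z y) (op x y)).

(* Connected components: classes of the smallest equivalence relation with
   x ~ x^y, i.e. the reflexive-transitive closure of the symmetrized relation. *)
Definition rack_edge : rel X :=
  fun x z => [exists y, z == op x y] || [exists y, x == op z y].
Definition same_comp (x c : X) : bool := connect rack_edge x c.

Definition comp_count (s : seq X) (c : X) : nat := count (fun x => same_comp x c) s.

Definition generates (s : seq X) : Prop :=
  forall S : {set X},
    (forall a b, a \in S -> b \in S -> op a b \in S) ->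
    (forall x, x \in s -> x \in S) -> S = setT.

(* s represents an element of S_X^*(N): length n >= 1, entries generate X,
   and every connected component contains at least N entries. *)
Definition in_SstarN (N : nat) (s : seq X) : Prop :=
  0 < size s /\ generates s /\ (forall c : X, N <= comp_count s c).

(* Hurwitz (braid group) action: sigma_i maps (.., a, b, ..) to (.., b, a^b, ..).
   Two tuples have the same class in X^n/B_n iff they are related by the
   equivalence closure of these moves. *)
Definition hurwitz_step (s t : seq X) : Prop :=
  exists s1 s2 a b, s = s1 ++ a :: b :: s2 /\ t = s1 ++ b :: op a b :: s2.
Definition braid_equiv : seq X -> seq X -> Prop :=
  clos_refl_sym_trans (seq X) hurwitz_step.

(* Structure group Gamma_X = < X | y^-1 x y = x^y >, as words in the free group:
   a letter (x, true) is x, (x, false) is x^-1.  Equality in Gamma_X is the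
   smallest congruence (closed under equivalence and insertion in context)
   containing free cancellation and the defining relations. *)
Inductive gamma_base : seq (X * bool) -> seq (X * bool) -> Prop :=
  | gb_cancel_r x : gamma_base [:: (x, true); (x, false)] [::]
  | gb_cancel_l x : gamma_base [:: (x, false); (x, true)] [::]
  | gb_rel x y : gamma_base [:: (y, false); (x, true); (y, true)] [:: (op x y, true)].

Definition gamma_step (u v : seq (X * bool)) : Prop :=
  exists w1 w2 l r, gamma_base l r /\ u = w1 ++ l ++ w2 /\ v = w1 ++ r ++ w2.
Definition gamma_eq : seq (X * bool) -> seq (X * bool) -> Prop :=
  clos_refl_sym_trans (seq (X * bool)) gamma_step.

Definition to_word (s : seq X) : seq (X * bool) := [seq (x, true) | x <- s].

End Rack.

(* Main.v *)
Require Import Defs.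
From mathcomp Require Import all_boot all_fingroup all_solvable.
From mathcomp Require Import zify.
From Stdlib Require Import Relation_Operators ClassicalEpsilon Classical.
Set Implicit Arguments. Unset Strict Implicit. Unset Printing Implicit Defensive.

Definition pb (P : Prop) : bool := if excluded_middle_informative P then true else false.
Lemma pbP (P : Prop) : reflect P (pb P).
Proof. by rewrite /pb; case: excluded_middle_informative => h; constructor. Qed.

Section Cls.
Variables (T : finType) (R : T -> T -> Prop).
Definition cls (A : {set T}) (s : T) : {set T} := [set t in A | pb (R s t)].
Definition ncls (A : {set T}) := #|[set cls A s | s in A]|.
End Cls.

Section ClsLemma.
Variables (T1 T2 : finType) (R1 : T1 -> T1 -> Prop) (R2 : T2 -> T2 -> Prop).
Hypotheses (r1 : forall s, R1 s s) (s1 : forall s t, R1 s t -> R1 t s)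
  (t1 : forall s t u, R1 s t -> R1 t u -> R1 s u).
Hypotheses (r2 : forall s, R2 s s) (s2 : forall s t, R2 s t -> R2 t s)
  (t2 : forall s t u, R2 s t -> R2 t u -> R2 s u).
Variables (A1 : {set T1}) (A2 : {set T2}) (f : T1 -> T2).
Hypotheses (fA : forall s, s \in A1 -> f s \in A2)
  (fR : forall s t, R1 s t -> R2 (f s) (f t))
  (fS : forall r, r \in A2 -> exists2 s, s \in A1 & R2 r (f s)).

Lemma cls_eq (T : finType) (R : T -> T -> Prop) (A : {set T}) s t :
  (forall s t u, R s t -> R t u -> R s u) -> (forall s t, R s t -> R t s) ->
  R s t -> cls R A s = cls R A t.
Proof.
move=> tr sy h; apply/setP => u; rewrite !inE; congr (_ && _).
apply/pbP/pbP => h'; [exact: tr (sy _ _ h) h' | exact: tr h h'].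
Qed.

Let g (C : {set T1}) : {set T2} := [set r in A2 | pb (exists2 s, s \in C & R2 (f s) r)].

Let g_cls s : s \in A1 -> g (cls R1 A1 s) = cls R2 A2 (f s).
Proof.
move=> sA; apply/setP => r; rewrite !inE; congr (_ && _).
apply/pbP/pbP => [[s' ]|h]; last by exists s => //; rewrite inE sA; apply/pbP.
rewrite inE => /andP[_ /pbP h] h'; exact: t2 (fR h) h'.
Qed.

Let img : [set cls R2 A2 r | r in A2] = g @: [set cls R1 A1 s | s in A1].
Proof.
apply/setP => C; apply/imsetP/imsetP => [[r rA ->]|[D /imsetP[s sA ->] ->]].
- have [s sA h] := fS rA; exists (cls R1 A1 s); first by apply/imsetP; exists s.
  rewrite g_cls //; exact: cls_eq.
- by exists (f s); [exact: fA | rewrite g_cls].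
Qed.

Lemma ncls_le : ncls R2 A2 <= ncls R1 A1.
Proof. by rewrite /ncls img leq_imset_card. Qed.

Lemma ncls_inj : ncls R2 A2 = ncls R1 A1 ->
  forall s t, s \in A1 -> t \in A1 -> R2 (f s) (f t) -> R1 s t.
Proof.
rewrite /ncls img => /eqP /imset_injP inj s t sA tA h.
have e : cls R1 A1 s = cls R1 A1 t.
  apply: inj; [exact: imset_f | exact: imset_f |].
  rewrite !g_cls //; exact: cls_eq.
have : t \in cls R1 A1 t by rewrite inE tA; apply/pbP.
by rewrite -e inE => /andP[_ /pbP].
Qed.
End ClsLemma.


Lemma exists_min (T : Type) (G : T -> nat) (t : T) : exists ms, forall m, G ms <= G m.
Proof.
suff H : forall n t, G t <= n -> exists ms, forall m, G ms <= G m by exact: H _ t (leqnn _).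
elim=> [|n IH] t0 h.
- by exists t0 => m; move: h; rewrite leqn0 => /eqP ->.
- case: (classic (exists m, G m < G t0)) => [[m hm]|hn].
  + apply: (IH m); lia.
  + exists t0 => m; rewrite leqNgt; apply/negP => hm; apply: hn; by exists m.
Qed.

Section Stab.
Variables (I Rho : finType) (F : Rho -> {ffun I -> nat} -> nat).
Definition addE (m : {ffun I -> nat}) (i : I) : {ffun I -> nat} := [ffun j => m j + (j == i)].
Hypothesis mono : forall r m i, F r (addE m i) <= F r m.

Let G m := \sum_(r : Rho) F r m.

Let Gmono m i : G (addE m i) <= G m.
Proof. by apply: leq_sum => r _; apply: mono. Qed.

Lemma stab : exists ms : {ffun I -> nat}, forall m : {ffun I -> nat}, (forall i, ms i <= m i) ->
  forall r i, F r (addE m i) = F r m.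
Proof.
have [ms hms] := exists_min G [ffun=> 0].
have down : forall k (m : {ffun I -> nat}), \sum_i (m i - ms i) = k -> (forall i, ms i <= m i) -> G m <= G ms.
  elim=> [|k IH] m hk hm.
  - have -> : m = ms; last exact: leqnn.
    apply/ffunP => i; apply/eqP; rewrite eqn_leq hm andbT.
    have /eqP := hk; rewrite sum_nat_eq0 => /forallP/(_ i) /= /eqP; lia.
  - have [i hi] : exists i, 0 < m i - ms i.
      case: (boolP [exists i, 0 < m i - ms i]) => [/existsP[i hi]|]; first by exists i.
      rewrite negb_exists => /forallP hn; exfalso.
      have : \sum_i (m i - ms i) == 0 by rewrite sum_nat_eq0; apply/forallP => i; have := hn i; lia.
      by rewrite hk.
    pose m' := [ffun j => m j - (j == i)].
    have em : m = addE m' i.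
      by apply/ffunP => j; rewrite !ffunE; case: (j =P i) => [->|]; lia.
    have hm' : forall j, ms j <= m' j.
      by move=> j; rewrite ffunE; have := hm j; case: (j =P i) => [->|]; lia.
    have hk' : \sum_j (m' j - ms j) = k.
      have e1 : forall j, m j - ms j = (m' j - ms j) + (j == i).
        by move=> j; rewrite ffunE; have := hm j; case: (j =P i) => [->|]; lia.
      move: hk; rewrite (eq_bigr _ (fun j _ => e1 j)) big_split /=.
      have -> : \sum_(j : I) ((j == i) : nat) = 1.
        rewrite (bigD1 i) //= eqxx big1 // => j /negbTE -> //.
      lia.
    rewrite em; apply: leq_trans (Gmono _ _) _; exact: IH.
exists ms => m hm r i.
have e : G (addE m i) = G m.
  apply/eqP; rewrite eqn_leq Gmono /=.
  apply: leq_trans (down _ _ erefl hm) (hms _).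
move: e; rewrite /G (bigD1 r) //= [X in _ = X -> _](bigD1 r) //=.
have h1 := mono r m i.
have h2 : \sum_(j | j != r) F j (addE m i) <= \sum_(j | j != r) F j m by apply: leq_sum => j _; apply: mono.
lia.
Qed.
End Stab.

Section Braid.
Variables (X : finType) (op : X -> X -> X).
Notation be := (braid_equiv op).

Lemma be_refl s : be s s. Proof. exact: rst_refl. Qed.
Lemma be_sym s t : be s t -> be t s. Proof. exact: rst_sym. Qed.
Lemma be_trans s t u : be s t -> be t u -> be s u. Proof. exact: rst_trans. Qed.

Lemma be_cong p q s t : be s t -> be (p ++ s ++ q) (p ++ t ++ q).
Proof.
elim=> [{}s {}t [s1 [s2 [a [b [-> ->]]]]]| {}s | {}s {}t _ IH | {}s t' u _ IH1 _ IH2].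
- apply: rst_step; exists (p ++ s1), (s2 ++ q), a, b.
  by split; rewrite -!catA.
- exact: be_refl.
- exact: be_sym.
- exact: be_trans IH1 IH2.
Qed.

Lemma be_catl p s t : be s t -> be (p ++ s) (p ++ t).
Proof. by move=> h; have := be_cong p [::] h; rewrite !cats0. Qed.
Lemma be_catr q s t : be s t -> be (s ++ q) (t ++ q).
Proof. by move=> h; have := be_cong [::] q h. Qed.
Lemma be_cons a s t : be s t -> be (a :: s) (a :: t).
Proof. exact: (be_catl [:: a]). Qed.

Lemma be_swap a b s : be (a :: b :: s) (b :: op a b :: s).
Proof. by apply: rst_step; exists [::], s, a, b. Qed.

Definition act (s : seq X) (y : X) : X := foldl op y s.

Lemma be_right x s : be (x :: s) (s ++ [:: act s x]).
Proof.
elim: s x => [|b s IH] x /=; first exact: be_refl.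
apply: be_trans (be_swap _ _ _) _; apply: be_cons; exact: IH.
Qed.

Lemma be_blockr m a : be (m ++ [:: a]) (a :: map (op^~ a) m).
Proof.
elim: m => [|y m IH] /=; first exact: be_refl.
apply: be_trans (be_cons y IH) _; exact: be_swap.
Qed.

Definition triv (c : seq X) := forall y, act c y = y.

Lemma triv_comm1 c a : triv c -> be (a :: c) (c ++ [:: a]).
Proof. by move=> h; have := be_right a c; rewrite h. Qed.

Lemma triv_comm c s : triv c -> be (s ++ c) (c ++ s).
Proof.
move=> h; elim: s => [|a s IH] /=; first by rewrite cats0; exact: be_refl.
apply: be_trans (be_cons a IH) _.
have := be_catr s (triv_comm1 a h); by rewrite -catA.
Qed.

Lemma triv_cat c d : triv c -> triv d -> triv (c ++ d).
Proof. by move=> hc hd y; rewrite /act foldl_cat; have := hc y; rewrite /act => ->; apply: hd. Qed.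


Section Rack.
Hypothesis hrack : is_rack op.

Lemma op_inj y : injective (op^~ y).
Proof. exact: bij_inj (hrack.1 y). Qed.

Definition inv (a : X) : X -> X := invF (@op_inj a).
Lemma op_inv a y : op (inv a y) a = y. Proof. exact: (f_invF (@op_inj a)). Qed.
Lemma inv_op a y : inv a (op y a) = y. Proof. exact: (invF_f (@op_inj a)). Qed.
Lemma inv_inj a : injective (inv a). Proof. exact: (can_inj (g := op^~ a) (op_inv a)). Qed.

Lemma be_blockl a m : be (a :: m) (map (inv a) m ++ [:: a]).
Proof.
apply: be_sym; apply: be_trans (be_blockr _ _) _.
rewrite -map_comp (eq_map (g := id)) ?map_id; first exact: be_refl.
by move=> y /=; rewrite op_inv.
Qed.

Lemma be_gather p a q : be (p ++ a :: q) ((p ++ map (inv a) q) ++ [:: a]).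
Proof. rewrite -catA; apply: be_catl; exact: be_blockl. Qed.

Definition K := #|[set: {perm X}]|.

Lemma K_gt0 : 0 < K.
Proof. by rewrite /K cardsT; apply/card_gt0P; exists 1%g. Qed.

Lemma iter_K y x : iter K (op^~ y) x = x.
Proof.
have := expg_cardG (in_setT (perm (@op_inj y)) : perm (@op_inj y) \in [set: {perm X}]%G).
move=> h; have := congr1 (fun p : {perm X} => p x) h.
rewrite permX perm1 => e; rewrite -[RHS]e.
by apply: eq_iter => z; rewrite permE.
Qed.

Lemma triv_nseq y : triv (nseq K y).
Proof.
move=> x; rewrite /act -[in RHS](iter_K y x).
elim: K x => [|n IH] x //. by rewrite iterSr -IH.
Qed.



Notation gen := (generates op).

Lemma gen_sub s t : gen s -> {subset s <= t} -> gen t.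
Proof. by move=> hs st S hS ht; apply: hs => // x /st; apply: ht. Qed.

Lemma gen_gather a y b : y \in a -> gen (a ++ y :: b) -> gen (a ++ map (inv y) b).
Proof.
move=> ya hg S hS hin; apply: hg => // x; rewrite mem_cat inE => /orP[xa|/orP[/eqP->|xb]].
- by apply: hin; rewrite mem_cat xa.
- by apply: hin; rewrite mem_cat ya.
- rewrite -(op_inv y x); apply: hS; last by apply: hin; rewrite mem_cat ya.
  by apply: hin; rewrite mem_cat map_f ?orbT.
Qed.

Lemma split_last (y : X) k s : k.+2 <= count_mem y s ->
  exists a b, s = a ++ y :: b /\ k.+1 <= count_mem y a.
Proof.
elim/last_ind: s => [|s w IH] //=.
rewrite -cats1 count_cat /= addn0.
case: eqP => [<-|_] h.
- by exists s, [::]; split => //; move: h; rewrite /= addn1.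
- rewrite addn0 in h; have [a [b [-> hc]]] := IH h.
  by exists a, (b ++ [:: w]); rewrite -catA.
Qed.

Lemma gather_k (y : X) k s : k < count_mem y s ->
  exists u, [/\ be s (u ++ nseq k y), y \in u & (gen s -> gen u)].
Proof.
elim: k s => [|k IH] s h.
- exists s; rewrite cats0; split => //; first exact: be_refl.
  by rewrite -has_pred1 has_count.
- have [a [b [es ha]]] := split_last h.
  have h2 : k < count_mem y (a ++ map (inv y) b) by rewrite count_cat; exact: leq_trans ha (leq_addr _ _).
  have [u [bu yu gu]] := IH _ h2.
  exists u; split => //.
  + rewrite es; apply: be_trans (be_gather _ _ _) _.
    apply: be_trans (be_catr _ bu) _.
    by rewrite -catA -[[:: y]]/(nseq 1 y) -nseqD addn1; exact: be_refl.
  + move=> gs; apply: gu; apply: gen_gather; last by rewrite -es.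
    by rewrite -has_pred1 has_count; exact: leq_trans ha.
Qed.


Lemma fin_closed (R : {set X}) (f : X -> X) : injective f ->
  (forall y, y \in R -> f y \in R) -> forall y, y \in R -> exists2 w, w \in R & f w = y.
Proof.
move=> fi hc y yR.
have sub : f @: R \subset R by apply/subsetP => z /imsetP[w wR ->]; apply: hc.
have := subset_cardP (card_imset R fi) sub => /(_ y); rewrite yR.
by case/imsetP => w wR ->; exists w.
Qed.

Lemma rack_id z x y : op (op z x) y = op (op z y) (op x y).
Proof. exact: hrack.2. Qed.

Lemma absorbE u y x : gen u -> same_comp op y x ->
  be (u ++ nseq K y) (u ++ nseq K x).
Proof.
move=> gu yx.
pose R := [set y' | pb (be (u ++ nseq K y) (u ++ nseq K y'))].
have inR y' : (y' \in R) = pb (be (u ++ nseq K y) (u ++ nseq K y')) by rewrite inE.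
have Rinv a y' : a \in u -> y' \in R -> inv a y' \in R.
  move=> au; rewrite !inR => /pbP h; apply/pbP; apply: be_trans h _.
  case/splitPr: au => p q.
  apply: be_trans (be_catr _ (be_gather _ _ _)) _.
  rewrite -catA /=; apply: be_trans (be_catl _ (be_blockl _ _)) _.
  rewrite map_nseq; apply: be_trans (be_catl _ (be_sym (triv_comm1 _ (triv_nseq _)))) _.
  rewrite -[_ :: nseq K _]/([:: a] ++ nseq K _) catA.
  apply: be_catr; exact: be_sym (be_gather _ _ _).
have Rop a y' : a \in u -> y' \in R -> op y' a \in R.
  move=> au yR; have [w wR e] := fin_closed (@inv_inj a) (fun z => Rinv a z au) yR.
  by rewrite -e op_inv.
pose B := [set b | [forall y', (y' \in R) ==> (op y' b \in R)]].
have inB b : (b \in B) = [forall y', (y' \in R) ==> (op y' b \in R)] by rewrite inE.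
have BT : B = setT.
  apply: gu.
  - move=> b1 b2; rewrite !inB => /forallP h1 /forallP h2; apply/forallP => y'; apply/implyP => yR.
    have [w wR e] := fin_closed (@op_inj b2) (fun z zR => implyP (h2 z) zR) yR.
    rewrite -e -rack_id; apply: (implyP (h2 _)); exact: (implyP (h1 _)).
  - move=> b bu; rewrite inB; apply/forallP => y'; apply/implyP; exact: Rop.
have Rop' b y' : y' \in R -> op y' b \in R.
  have : b \in B by rewrite BT inE.
  by rewrite inB => /forallP h; move/(implyP (h y')).
have Rinv' b y' : y' \in R -> inv b y' \in R.
  move=> yR; have [w wR e] := fin_closed (@op_inj b) (fun z => Rop' b z) yR.
  by rewrite -e inv_op.
have cl : closed (rack_edge op) R.
  have one x1 x2 : rack_edge op x1 x2 -> x1 \in R -> x2 \in R.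
    case/orP => /existsP[b /eqP ->]; first by apply: Rop'.
    by move=> h; rewrite -(inv_op b x2); apply: Rinv'.
  move=> x1 x2 e; apply/idP/idP; first exact: one.
  apply: one; move: e; rewrite /rack_edge orbC.
  by case/orP => /existsP[b /eqP ->]; apply/orP; [left|right]; apply/existsP; exists b.
have yR : y \in R by rewrite inR; apply/pbP; exact: be_refl.
have := closed_connect cl yx; rewrite yR inR => /esym /pbP; done.
Qed.


Lemma count_sum_mem (P : pred X) r : count P r = \sum_(y | P y) count_mem y r.
Proof.
elim: r => [|a r IH] /=; first by rewrite big1.
rewrite IH big_split /=; congr (_ + _).
rewrite big_mkcond (bigD1 a) //= eqxx big1 ?addn0; first by case: (P a).
by move=> y /negbTE ya; rewrite eq_sym ya; case: (P y).
Qed.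

Lemma absorb r x : gen r -> K * #|X| < count (fun y => same_comp op y x) r ->
  exists u, gen u /\ be r (u ++ nseq K x).
Proof.
move=> gr hc.
have [y [yx hy]] : exists y, same_comp op y x /\ K < count_mem y r.
  case: (boolP [exists y, same_comp op y x && (K < count_mem y r)]).
    by case/existsP => y /andP[h1 h2]; exists y.
  rewrite negb_exists => /forallP hn; exfalso; move: hc; apply/negP; rewrite -leqNgt.
  rewrite count_sum_mem; apply: (@leq_trans (\sum_(y : X) K)).
    apply: (@leq_trans (\sum_(y | same_comp op y x) K)); first apply: leq_sum.
      by move=> y yx; have := hn y; rewrite yx /= -leqNgt => h; exact h.
    by rewrite [X in _ <= X](bigID (fun y => same_comp op y x)) /= leq_addr.
  by rewrite sum_nat_const mulnC.
have [u [bu yu gu]] := gather_k (k := K) hy.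
exists u; split; first exact: gu.
apply: be_trans bu _; exact: absorbE (gu gr) yx.
Qed.


Local Notation e := (rack_edge op).

Lemma edge_sym : symmetric e.
Proof. by move=> x y; rewrite /rack_edge orbC. Qed.
Let csym := sym_connect_sym edge_sym.

Lemma same_root x c : same_comp op x c = (root e x == root e c).
Proof. by apply/idP/eqP => /(rootP csym). Qed.

Definition I := {c : X | root e c == c}.
Lemma rr x : root e (root e x) == root e x. Proof. by rewrite root_root. Qed.
Definition iroot x : I := exist _ (root e x) (rr x).

Lemma sc_iroot x (i : I) : same_comp op x (val i) = (i == iroot x).
Proof.
rewrite same_root (eqP (valP i)) eq_sym.
by apply/eqP/eqP => [h|-> //]; apply: val_inj.
Qed.

Lemma iroot_val (i : I) : iroot (val i) = i.
Proof. by apply: val_inj; rewrite /= (eqP (valP i)). Qed.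

Definition D (s : seq X) : {ffun I -> nat} := [ffun i => comp_count op s (val i)].

Lemma D_cat s t i : D (s ++ t) i = D s i + D t i.
Proof. by rewrite !ffunE /comp_count count_cat. Qed.

Lemma D_nseq n x i : D (nseq n x) i = n * (i == iroot x).
Proof. by rewrite ffunE /comp_count count_nseq sc_iroot mulnC. Qed.

Lemma sum_ind (x : I) : \sum_(j : I) ((j == x) : nat) = 1.
Proof. by rewrite (bigD1 x) //= eqxx big1 // => j /negbTE ->. Qed.

Lemma size_D s : size s = \sum_i D s i.
Proof.
elim: s => [|a s IH] /=; first by rewrite big1 // => i _; rewrite ffunE.
rewrite (eq_bigr (fun i => ((i == iroot a) : nat) + D s i)); last first.
  by move=> i _; rewrite -[a :: s]/([:: a] ++ s) D_cat (D_nseq 1) mul1n.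
by rewrite big_split /= sum_ind IH.
Qed.

Lemma count_D r x : count (fun y => same_comp op y x) r = D r (iroot x).
Proof.
rewrite ffunE /comp_count; apply: eq_count => y /=.
by rewrite !same_root /= root_root.
Qed.

Lemma D_be s t : be s t -> D s = D t.
Proof.
elim=> {s t} [s t [s1 [s2 [a [b [-> ->]]]]]| s | s t _ IH | s t u _ IH1 _ IH2] //;
  last by rewrite IH1 IH2.
apply/ffunP => i; rewrite !D_cat; congr (_ + _).
have h : same_comp op (op a b) (val i) = same_comp op a (val i).
  rewrite !same_root; congr (_ == _); apply/esym; apply/(rootP csym); apply: connect1.
  by rewrite /rack_edge; apply/orP; left; apply/existsP; exists b.
by rewrite !ffunE /comp_count /= h addnCA.
Qed.


Definition nd (d : {ffun I -> nat}) := \sum_i d i.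
Definition Aset (d : {ffun I -> nat}) : {set (nd d).-tuple X} :=
  [set t : (nd d).-tuple X | pb (gen (tval t)) && (D (tval t) == d)].
Definition Fc (d : {ffun I -> nat}) :=
  ncls (fun s t : (nd d).-tuple X => be (tval s) (tval t)) (Aset d).

Definition bump (d : {ffun I -> nat}) (x : X) : {ffun I -> nat} :=
  [ffun j => d j + K * (j == iroot x)].

Lemma nd_bump d x : nd (bump d x) = nd d + K.
Proof.
rewrite /nd (eq_bigr (fun j => d j + K * (j == iroot x))) ?big_split /=; last by move=> j; rewrite ffunE.
by rewrite -big_distrr /= sum_ind muln1.
Qed.

Lemma D_bump u x : D (u ++ nseq K x) = bump (D u) x.
Proof. by apply/ffunP => j; rewrite D_cat D_nseq [RHS]ffunE. Qed.

Lemma bump_inj d1 d2 x : bump d1 x = bump d2 x -> d1 = d2.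
Proof. by move=> h; apply/ffunP => j; have := congr1 (fun f : {ffun I -> nat} => f j) h; rewrite !ffunE => /addIn. Qed.

Lemma step (d : {ffun I -> nat}) x : (K * #|X|) < d (iroot x) ->
  Fc (bump d x) <= Fc d /\
  (Fc (bump d x) = Fc d -> forall u v, gen u -> gen v -> D u = d -> D v = d ->
     be (u ++ nseq K x) (v ++ nseq K x) -> be u v).
Proof.
move=> hd.
pose t0 : (nd (bump d x)).-tuple X := [tuple of nseq (nd (bump d x)) x].
pose f (t : (nd d).-tuple X) : (nd (bump d x)).-tuple X := insubd t0 (tval t ++ nseq K x).
have vf t : tval (f t) = tval t ++ nseq K x.
  by rewrite /f insubdK // -topredE /= size_cat size_tuple size_nseq nd_bump.
have fA : forall s, s \in Aset d -> f s \in Aset (bump d x).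
  move=> s; rewrite !inE => /andP[/pbP gs /eqP Ds]; rewrite vf D_bump Ds eqxx andbT.
  apply/pbP; apply: (gen_sub gs) => y ys; by rewrite mem_cat ys.
have fR : forall s t : (nd d).-tuple X, be (tval s) (tval t) -> be (tval (f s)) (tval (f t)).
  by move=> s t h; rewrite !vf; apply: be_catr.
have fS : forall r, r \in Aset (bump d x) -> exists2 s, s \in Aset d & be (tval r) (tval (f s)).
  move=> r; rewrite inE => /andP[/pbP gr /eqP Dr].
  have hc : K * #|X| < count (fun y => same_comp op y x) r.
    by rewrite count_D Dr ffunE eqxx; apply: leq_trans hd (leq_addr _ _).
  have [u [gu bu]] := absorb gr hc.
  have Du : D u = d by apply: (@bump_inj _ _ x); rewrite -D_bump -(D_be bu).
  have su : size u == nd d by rewrite size_D Du.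
  exists (Tuple su); last by rewrite vf.
  by rewrite inE /= Du eqxx andbT; apply/pbP.
pose R1 := fun s t : (nd d).-tuple X => be s t.
pose R2 := fun s t : (nd (bump d x)).-tuple X => be s t.
have r1 : forall s, R1 s s by move=> s; exact: be_refl.
have s2 : forall s t, R2 s t -> R2 t s by move=> s t; exact: be_sym.
have t2 : forall s t u, R2 s t -> R2 t u -> R2 s u by move=> s t u; exact: be_trans.
have hle := @ncls_le _ _ R1 R2 r1 s2 t2 _ _ _ fA fR fS.
split => // heq u v gu gv Du Dv buv.
have su : size u == nd d by rewrite size_D Du.
have sv : size v == nd d by rewrite size_D Dv.
have := @ncls_inj _ _ R1 R2 r1 s2 t2 _ _ _ fA fR fS heq (Tuple su) (Tuple sv).
rewrite /R1 /R2 /=; apply.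
- by rewrite inE /= Du eqxx andbT; apply/pbP.
- by rewrite inE /= Dv eqxx andbT; apply/pbP.
- by rewrite !vf.
Qed.


Definition N1 := (K * #|X|).+1.
Definition dd (r : {ffun I -> 'I_K}) (m : {ffun I -> nat}) : {ffun I -> nat} :=
  [ffun j => N1 + r j + K * m j].

Lemma dd_addE r m i : dd r (addE m i) = [ffun j => dd r m j + K * (j == i)].
Proof. by apply/ffunP => j; rewrite !ffunE mulnDr addnA. Qed.

Lemma dd_big r m j : K * #|X| < dd r m j.
Proof. by rewrite ffunE /N1 -addnA; apply: leq_addr. Qed.

Lemma inj_main : exists N0, forall u v x, gen u -> gen v -> (forall i, N0 <= D u i) ->
  be (u ++ nseq K x) (v ++ nseq K x) -> be u v.
Proof.
have mono : forall r m i, Fc (dd r (addE m i)) <= Fc (dd r m).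
  move=> r m i.
  have hd : K * #|X| < dd r m (iroot (val i)) by rewrite iroot_val; exact: dd_big.
  have := (step hd).1.
  have -> : bump (dd r m) (val i) = dd r (addE m i).
    by rewrite dd_addE /bump iroot_val.
  done.
have [ms hms] := stab (F := fun r m => Fc (dd r m)) mono.
exists (N1 + K * \max_(i : I) ms i) => u v x gu gv hu buv.
have Dv : D v = D u.
  apply: (@bump_inj _ _ x); rewrite -!D_bump; exact: esym (D_be buv).
pose d := D u.
pose r : {ffun I -> 'I_K} := [ffun j => Ordinal (ltn_pmod (d j - N1) K_gt0)].
pose m : {ffun I -> nat} := [ffun j => (d j - N1) %/ K].
have N1d : forall j, N1 <= d j.
  move=> j; apply: leq_trans (hu j); exact: leq_addr.
have ed : dd r m = d.
  apply/ffunP => j; have := N1d j; rewrite /d !ffunE /= => h.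
  by rewrite -addnA [_ %% K + _]addnC mulnC -divn_eq subnKC.
have hm : forall i, ms i <= m i.
  move=> i; rewrite ffunE.
  have h1 : ms i <= \max_(j : I) ms j by apply: leq_bigmax.
  apply: leq_trans h1 _.
  rewrite leq_divRL ?K_gt0 // mulnC leq_subRL ?N1d //; exact: hu.
have heq := hms m hm r (iroot x).
have hd : K * #|X| < d (iroot x) by rewrite -ed; exact: dd_big.
have := (step hd).2; apply => //.
rewrite -ed /bump -heq dd_addE; congr Fc.
Qed.


Definition C (L : seq X) : seq X := flatten [seq nseq K y | y <- L].
Lemma triv_C L : triv (C L).
Proof.
elim: L => [|y L IH] /=; first by move=> z.
exact: triv_cat (triv_nseq _) IH.
Qed.
Lemma C_cat L1 L2 : C (L1 ++ L2) = C L1 ++ C L2.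
Proof. by rewrite /C map_cat flatten_cat. Qed.

Definition zk k := C (flatten (nseq k (enum X))).
Lemma zk_add a b : zk (a + b) = zk a ++ zk b.
Proof. by rewrite /zk nseqD flatten_cat C_cat. Qed.
Lemma zk0 : zk 0 = [::]. Proof. by []. Qed.
Lemma zcomm n s : be (s ++ zk n) (zk n ++ s).
Proof. exact: triv_comm (triv_C _). Qed.

Lemma wx_ex x : exists w, be (x :: w) (zk 1) /\ be (w ++ [:: x]) (zk 1).
Proof.
have ez0 : zk 1 = C (enum X) by rewrite /zk /= cats0.
rewrite ez0.
have : x \in enum X by rewrite mem_enum.
case/splitPr => p q.
have ez : C (p ++ x :: q) = C p ++ nseq K x ++ C q by rewrite C_cat.
rewrite ez.
have b1 : be (C p ++ nseq K x ++ C q) (nseq K x ++ C p ++ C q).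
  rewrite !catA; apply: be_catr; apply: be_sym; exact: triv_comm (triv_C _).
have tz : triv (C p ++ C q) by apply: triv_cat; apply: triv_C.
have eK : nseq K x = x :: nseq K.-1 x by rewrite -[in LHS](prednK K_gt0).
exists (nseq K.-1 x ++ C p ++ C q); split.
- by apply: be_sym; rewrite -cat_cons -eK.
- apply: be_trans (be_sym b1); rewrite -catA; apply: be_trans (be_catl _ (be_sym (triv_comm [:: x] tz))) _.
  by rewrite catA -[[:: x]]/(nseq 1 x) -nseqD addn1 prednK ?K_gt0 //; exact: be_refl.
Qed.

Definition wf x : seq X := proj1_sig (constructive_indefinite_description _ (wx_ex x)).
Lemma wf1 x : be (x :: wf x) (zk 1).
Proof. by rewrite /wf; case: constructive_indefinite_description => w [] /=. Qed.
Lemma wf2 x : be (wf x ++ [:: x]) (zk 1).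
Proof. by rewrite /wf; case: constructive_indefinite_description => w [] /=. Qed.

Fixpoint img (w : seq (X * bool)) : seq X * nat :=
  if w is (x, b) :: w' then
    (if b then (x :: (img w').1, (img w').2) else (wf x ++ (img w').1, (img w').2.+1))
  else ([::], 0).

Lemma img_cat w1 w2 : img (w1 ++ w2) = ((img w1).1 ++ (img w2).1, (img w1).2 + (img w2).2).
Proof.
elim: w1 => [|[x b] w IH] /=; first by case: (img w2).
by rewrite IH; case: b => /=; rewrite ?catA ?addSn. Qed.

Definition grel (p q : seq X * nat) := exists k, be (p.1 ++ zk (q.2 + k)) (q.1 ++ zk (p.2 + k)).

Lemma grel_refl p : grel p p.
Proof. by exists 0; exact: be_refl. Qed.
Lemma grel_sym p q : grel p q -> grel q p.
Proof. by case=> k h; exists k; exact: be_sym. Qed.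
Lemma grel_trans p q r : grel p q -> grel q r -> grel p r.
Proof.
case: p q r => [m i] [m' i'] [m'' i''] [k h1] [l h2] /=; simpl in h1, h2.
exists (i' + k + l).
have -> : i'' + (i' + k + l) = (i' + k) + (i'' + l) by lia.
have -> : i + (i' + k + l) = (i' + l) + (i + k) by lia.
rewrite (zk_add (i' + k)) (zk_add (i' + l)) !catA.
apply: be_trans (be_catr _ h1) _; rewrite -!catA.
apply: be_trans (be_catl _ (zcomm _ _)) _; rewrite !catA.
exact: be_catr h2.
Qed.


Lemma grel_cong w1 w2 l r : grel (img l) (img r) ->
  grel (img (w1 ++ l ++ w2)) (img (w1 ++ r ++ w2)).
Proof.
rewrite !img_cat /=.
case: (img w1) (img w2) (img l) (img r) => [A a] [B b] [m i] [m' i'] [k h] /=; simpl in h.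
exists k.
have -> : a + (i' + b) + k = (i' + k) + (a + b) by lia.
have -> : a + (i + b) + k = (i + k) + (a + b) by lia.
rewrite (zk_add (i' + k)) (zk_add (i + k)) -!catA.
have e1 : forall n, be (B ++ zk n ++ zk (a + b)) (zk n ++ B ++ zk (a + b)).
  by move=> n; rewrite !catA; apply: be_catr; exact: zcomm.
apply: be_catl; apply: be_trans (be_catl _ (e1 _)) _.
rewrite catA; apply: be_trans (be_catr _ h) _.
rewrite -catA; apply: be_catl; exact: be_sym (e1 _).
Qed.

Lemma grel_base l r : gamma_base op l r -> grel (img l) (img r).
Proof.
case=> [x|x|x y] /=; exists 0 => /=; rewrite ?zk0 ?cats0.
- exact: wf1.
- exact: wf2.
- apply: be_trans (be_catl _ (be_swap x y [::])) _.
  rewrite -[_ :: [:: _]]/([:: y] ++ [:: op x y]) catA.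
  apply: be_trans (be_catr _ (wf2 y)) _.
  exact: be_sym (zcomm 1 [:: op x y]).
Qed.

Lemma gamma_grel u v : gamma_eq op u v -> grel (img u) (img v).
Proof.
elim=> {u v} [u v [w1 [w2 [l [r [hb [-> ->]]]]]]| u | u v _ IH | u v w _ IH1 _ IH2].
- exact: grel_cong (grel_base hb).
- exact: grel_refl.
- exact: grel_sym.
- exact: grel_trans IH1 IH2.
Qed.

Lemma img_word s : img (to_word s) = (s, 0).
Proof. by elim: s => [|x s IH] //=; rewrite IH. Qed.

Lemma cancelC N0 : (forall u v x, gen u -> gen v -> (forall i, N0 <= D u i) ->
    be (u ++ nseq K x) (v ++ nseq K x) -> be u v) ->
  forall L u v, gen u -> gen v -> (forall i, N0 <= D u i) -> be (u ++ C L) (v ++ C L) -> be u v.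
Proof.
move=> hinj; elim/last_ind => [|L x IH] u v gu gv hu.
  by rewrite /C /= !cats0.
rewrite -cats1 C_cat /C /= cats0 -/(C L) !catA => h.
apply: IH => //.
apply: hinj h.
- by apply: (gen_sub gu) => y yu; rewrite mem_cat yu.
- by apply: (gen_sub gv) => y yu; rewrite mem_cat yu.
- by move=> i; rewrite D_cat; apply: leq_trans (hu i) (leq_addr _ _).
Qed.

Lemma final : exists N0 : nat, forall N : nat, N0 <= N ->
    forall s t : seq X, in_SstarN op N s -> in_SstarN op N t ->
      gamma_eq op (to_word s) (to_word t) -> braid_equiv op s t.
Proof.
have [N0 hinj] := inj_main.
exists N0 => N hN s t [_ [gs cs]] [_ [gt ct]] hg.
have [k h] := gamma_grel hg; rewrite !img_word /= in h.
apply: (cancelC hinj (L := flatten (nseq (0 + k) (enum X)))) => //.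
by move=> i; rewrite ffunE; apply: leq_trans hN (cs _).
Qed.

End Rack.
End Braid.

Theorem theorem4p24 (X : finType) (op : X -> X -> X) (hrack : is_rack op) :
  exists N0 : nat, forall N : nat, N0 <= N ->
    forall s t : seq X, in_SstarN op N s -> in_SstarN op N t ->
      gamma_eq op (to_word s) (to_word t) -> braid_equiv op s t.
Proof. exact: final hrack. Qed.
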